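(* Let $p$ be a prime and let $G$ be a non-abelian, non-metacyclic group of order $p^3$. Then there exist at least $p+1$ pairwise non-isomorphic local nearrings whose additive group is isomorphic to $G$.
   Context: A (left) nearring is a set $R$ with two binary operations $+$ and $\cdot$ such that $(R,+)$ is a group (not necessarily abelian) with neutral element $0$, $(R,\cdot)$ is a semigroup, and $x\cdot(y+z)=x\cdot y+x\cdot z$ for all $x,y,z\in R$. A nearring with identity is one where $(R,\cdot)$ is a monoid. A nearring $R$ with identity is called local if the set $L$ of all non-invertible elements of $(R,\cdot)$ is a subgroup of $(R,+)$. The additive group of $R$ is $(R,+)$. Two nearrings are isomorphic if there is a bijection preserving both operations. *)

(* Defs.v *)
From mathcomp Require Import all_boot all_fingroup all_solvable.

Record nearring := NearRing {
  nr_car :> Type;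
  nr_add : nr_car -> nr_car -> nr_car;
  nr_zero : nr_car;
  nr_opp : nr_car -> nr_car;
  nr_mul : nr_car -> nr_car -> nr_car
}.

Set Implicit Arguments. Unset Strict Implicit. Unset Printing Implicit Defensive.

Definition is_nearring (R : nearring) : Prop :=
  let add := nr_add R in let mul := nr_mul R in
  let z := nr_zero R in let opp := nr_opp R in
  [/\ (forall x y w : R, add x (add y w) = add (add x y) w),
      (forall x : R, add z x = x /\ add x z = x),
      (forall x : R, add (opp x) x = z /\ add x (opp x) = z),
      (forall x y w : R, mul x (mul y w) = mul (mul x y) w)
    & (forall x y w : R, mul x (add y w) = add (mul x y) (mul x w))].

Definition nr_is_one (R : nearring) (e : R) : Prop :=
  forall x : R, nr_mul R e x = x /\ nr_mul R x e = x.

Definition nr_invertible (R : nearring) (e x : R) : Prop :=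
  exists y : R, nr_mul R x y = e /\ nr_mul R y x = e.

Definition nr_add_subgroup (R : nearring) (S : R -> Prop) : Prop :=
  [/\ S (nr_zero R),
      (forall x y, S x -> S y -> S (nr_add R x y))
    & (forall x, S x -> S (nr_opp R x))].

Definition local_nearring (R : nearring) : Prop :=
  is_nearring R /\
  exists e : R, nr_is_one e /\
    nr_add_subgroup (fun x : R => ~ nr_invertible e x).

Definition nr_isomorphic (R S : nearring) : Prop :=
  exists f : R -> S, bijective f /\
    (forall x y : R, f (nr_add R x y) = nr_add S (f x) (f y)) /\
    (forall x y : R, f (nr_mul R x y) = nr_mul S (f x) (f y)).

Definition additive_group_isomorphic (R : nearring) (gT : finGroupType) : Prop :=
  exists f : R -> gT, bijective f /\
    (forall x y : R, f (nr_add R x y) = (f x * f y)%g).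

(* Main.v *)
Require Import Defs.
From mathcomp Require Import all_boot all_fingroup all_solvable.
From mathcomp Require Import all_order all_algebra all_field.
From mathcomp Require Import ring.
Set Implicit Arguments. Unset Strict Implicit. Unset Printing Implicit Defensive.
Import GRing.Theory.

Section Model.
Variable p : nat.
Local Notation F := 'F_p.
Definition H := (F * F * F)%type.
Local Open Scope ring_scope.
Definition hadd (u v : H) : H := (u.1.1 + v.1.1, u.1.2 + v.1.2, u.2 + v.2 + u.1.1 * v.1.2).
Definition hzero : H := (0,0,0).
Definition hopp (u : H) : H := (- u.1.1, - u.1.2, - u.2 + u.1.1 * u.1.2).
Definition hmul (k : nat) (t : F) (u v : H) : H :=
  (u.1.1 * v.1.1, u.1.2 * v.1.1 + u.1.1 ^+ k * v.1.2,
   u.1.1 * u.1.1 ^+ k * v.2 + u.1.1 * u.1.2 / 2 * v.1.1 ^+ 2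
   + (u.2 - u.1.1 * u.1.2 / 2) * v.1.1 + t * u.1.1 * u.1.2 * v.1.2).
Definition hone : H := (1, 0, 0).

Hypothesis two_nz : (2 : F) != 0.

Lemma hadd_assoc (x y w : H) : hadd x (hadd y w) = hadd (hadd x y) w.
Proof. case: x => [[a b] c]; case: y => [[a1 b1] c1]; case: w => [[a2 b2] c2].
rewrite /hadd /=; congr (_, _, _); ring. Qed.

Lemma hmul_assoc k t (kt : t = 0 \/ k = 2%N) (x y w : H) :
  hmul k t x (hmul k t y w) = hmul k t (hmul k t x y) w.
Proof. case: x => [[a b] c]; case: y => [[a1 b1] c1]; case: w => [[a2 b2] c2].
rewrite /hmul /=; case: kt => [->|->]; rewrite ?exprMn; congr (_, _, _); field; rewrite ?two_nz //. Qed.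

Lemma hmul_distr k t (x y w : H) :
  hmul k t x (hadd y w) = hadd (hmul k t x y) (hmul k t x w).
Proof. case: x => [[a b] c]; case: y => [[a1 b1] c1]; case: w => [[a2 b2] c2].
rewrite /hmul /hadd /=; congr (_, _, _); field; rewrite ?two_nz //. Qed.

Lemma hone_l k t (x : H) : hmul k t hone x = x.
Proof. case: x => [[a b] c]; rewrite /hmul /=; congr (_, _, _); rewrite ?expr1n; field; rewrite ?two_nz //. Qed.
Lemma hone_r k t (x : H) : hmul k t x hone = x.
Proof. case: x => [[a b] c]; rewrite /hmul /=; congr (_, _, _); field; rewrite ?two_nz //. Qed.

Lemma hinj k t (x : H) : x.1.1 != 0 -> injective (hmul k t x).
Proof.
case: x => [[a b] c] /= a0 [[u1 u2] u3] [[v1 v2] v3].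
move=> E.
have /= e1 := congr1 (fun w : H => w.1.1) E.
have /= e2 := congr1 (fun w : H => w.1.2) E.
have /= e3 := congr1 (fun w : H => w.2) E.
have e1' : u1 = v1 by apply: (mulfI a0).
subst v1; have e2' : u2 = v2 by apply: (mulfI (expf_neq0 k a0)); apply: (addrI (b * u1)).
subst v2; congr (_, _, _); apply: (mulfI (mulf_neq0 a0 (expf_neq0 k a0))).
by move: e3 => /addIr/addIr/addIr.
Qed.

Definition NR k t : nearring := NearRing H hadd hzero hopp (hmul k t).

Lemma NR_nearring k t (kt : t = 0 \/ k = 2%N) : is_nearring (NR k t).
Proof.
split => /=.
- exact: hadd_assoc.
- by move=> [[a b] c]; rewrite /hadd /=; split; congr (_,_,_); ring.
- by move=> [[a b] c]; rewrite /hadd /hopp /=; split; congr (_,_,_); ring.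
- exact: hmul_assoc.
- exact: hmul_distr.
Qed.

Lemma NR_one k t : nr_is_one (R := NR k t) hone.
Proof. by move=> x; split; [apply: hone_l | apply: hone_r]. Qed.

Lemma NR_invertible k t (kt : t = 0 \/ k = 2%N) (x : H) :
  nr_invertible (R := NR k t) hone x <-> x.1.1 != 0.
Proof.
split.
  case=> y [xy _]; have /= := congr1 (fun w : H => w.1.1) xy.
  rewrite /hmul /= => e1; apply/eqP => a0; move: e1; rewrite a0 mul0r.
  by move/eqP; rewrite eq_sym oner_eq0.
move=> a0; have [g gK Kg] := injF_bij (@hinj k t x a0).
pose y := g hone; have xy : hmul k t x y = hone by rewrite /y Kg.
have yinj : injective (hmul k t y).
  move=> u v e; rewrite -(@hone_l k t u) -(@hone_l k t v) -xy -!hmul_assoc //.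
  by rewrite e.
have [g2 _ Kg2] := injF_bij yinj.
pose z := g2 hone; have yz : hmul k t y z = hone by rewrite /z Kg2.
have xz : x = z by rewrite -(@hone_r k t x) -yz hmul_assoc // xy hone_l.
by exists y; split => //=; rewrite xz.
Qed.

Lemma NR_local k t (kt : t = 0 \/ k = 2%N) : local_nearring (NR k t).
Proof.
split; first exact: NR_nearring.
exists hone; split; first exact: NR_one.
have E (x : H) : ~ nr_invertible (R := NR k t) hone x <-> x.1.1 = 0.
  rewrite NR_invertible //; split; first by move/negP; rewrite negbK => /eqP.
  by move=> ->; rewrite eqxx.
split => /=.
- by apply/E.
- by move=> x y /E x0 /E y0; apply/E; rewrite /= x0 y0 addr0.
- by move=> x /E x0; apply/E; rewrite /= x0 oppr0.
Qed.

Fixpoint hnat (x : H) (n : nat) : H := if n is m.+1 then hadd (hnat x m) x else hzero.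

Lemma hnat12 x n : (hnat x n).1.1 = n%:R * x.1.1 /\ (hnat x n).1.2 = n%:R * x.1.2.
Proof.
elim: n => [|n [IH1 IH2]] /=; first by rewrite !mul0r.
by rewrite IH1 IH2 !mulrSr !mulrDl !mul1r.
Qed.

Lemma hnat_a0 x n : x.1.1 = 0 -> hnat x n = (0, n%:R * x.1.2, n%:R * x.2).
Proof.
move=> x0; elim: n => [|n IH] /=; first by rewrite !mul0r.
rewrite IH /hadd /= x0 !mulrSr; congr (_,_,_); ring.
Qed.

Lemma hnat_one n : hnat hone n = (n%:R, 0, 0).
Proof.
elim: n => [|n IH] //=; rewrite IH /hadd /= mulrSr; congr (_,_,_); ring.
Qed.

Definition hcentral (z : H) := forall v, hadd z v = hadd v z.

Lemma hcentralE z : hcentral z <-> z.1.1 = 0 /\ z.1.2 = 0.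
Proof.
split.
  move=> cz; have := congr1 (fun w : H => w.2) (cz (1, 0, 0)).
  have := congr1 (fun w : H => w.2) (cz (0, 1, 0)).
  rewrite /hadd /= !mulr0 !mul0r !mulr1 !addr0 !add0r => e1 e2.
  split.
    by apply: (addrI z.2); rewrite addr0.
  rewrite mul1r in e2; apply: (addrI z.2); rewrite addr0; symmetry; exact: e2.
case: z => [[a b] c] /= [-> ->] [[a1 b1] c1]; rewrite /hadd /=; congr (_,_,_); ring.
Qed.

Section Iso.
Variables (k k' : nat) (t t' : F) (f : H -> H).
Hypothesis fbij : bijective f.
Hypothesis fadd : forall x y, f (hadd x y) = hadd (f x) (f y).
Hypothesis fmul : forall x y, f (hmul k t x y) = hmul k' t' (f x) (f y).

Lemma f0 : f hzero = hzero.
Proof.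
have h00 : hadd hzero hzero = hzero.
  rewrite /hadd /hzero /=; congr (_,_,_); ring.
have := fadd hzero hzero; rewrite h00.
case: (f hzero) => [[a b] c] E.
have /= e1 := congr1 (fun w : H => w.1.1) E.
have /= e2 := congr1 (fun w : H => w.1.2) E.
have /= e3 := congr1 (fun w : H => w.2) E.
have a0 : a = 0 by apply: (addrI a); rewrite addr0.
have b0 : b = 0 by apply: (addrI b); rewrite addr0.
move: e3; rewrite a0 mul0r addr0 => e3.
have c0 : c = 0 by apply: (addrI c); rewrite addr0.
by rewrite b0 c0.
Qed.

Lemma f_nat x n : f (hnat x n) = hnat (f x) n.
Proof. by elim: n => [|n IH] /=; rewrite ?f0 // fadd IH. Qed.

Lemma f_one : f hone = hone.
Proof.
have [g gK Kg] := fbij.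
by rewrite -(@hone_r k' t' (f hone)) -{2}(Kg hone) -fmul hone_l Kg.
Qed.

Lemma f_central z : hcentral z -> hcentral (f z).
Proof.
have [g gK Kg] := fbij.
by move=> cz v; rewrite -(Kg v) -!fadd cz.
Qed.

Lemma f_central_inv z : hcentral (f z) -> hcentral z.
Proof.
have [g gK Kg] := fbij.
by move=> cz v; apply: (can_inj gK); rewrite !fadd cz.
Qed.

Lemma f_inj : injective f.
Proof. exact: bij_inj. Qed.

Lemma I0 : k = 0%N -> (0 < k')%N -> False.
Proof.
move=> k0 k'pos.
have fmul0 : forall x y, f (hmul 0 t x y) = hmul k' t' (f x) (f y) by rewrite -k0.
have hw : hmul 0 t hzero (0, 1, 0) = (0, 1, 0).
  rewrite /hmul /= expr0; congr (_,_,_); ring.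
have : f (0, 1, 0) = f hzero.
  have F0 := f0. rewrite -{1}hw fmul0 F0 /hmul /= expr0n eqn0Ngt k'pos /=; congr (_,_,_); ring.
move/f_inj => E; have := congr1 (fun w : H => w.1.2) E => /= /eqP.
by rewrite oner_eq0.
Qed.

Lemma fz0 : exists2 c1 : F, c1 != 0 & forall s, f (0, 0, s) = (0, 0, s * c1).
Proof.
have cz0 : hcentral (0, 0, 1) by apply/hcentralE.
have /hcentralE [e1 e2] := f_central cz0.
exists (f (0,0,1)).2.
  apply/eqP => c0; have : f (0,0,1) = f hzero.
    by rewrite f0; case: (f (0,0,1)) e1 e2 c0 => [[a b] c] /= -> -> ->.
  by move/f_inj => E; have := congr1 (fun w : H => w.2) E => /= /eqP; rewrite oner_eq0.
move=> s; have -> : ((0, 0, s) : H) = hnat (0, 0, 1) (nat_of_ord s).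
  by rewrite hnat_a0 //= mulr0 mulr1 natr_Zp.
by rewrite f_nat (hnat_a0 _ e1) e2 mulr0 natr_Zp.
Qed.

Lemma I1 (u : F) : u ^+ k.+1 = u ^+ k'.+1.
Proof.
have [c1 c1nz fc] := fz0.
have hu : ((u, 0, 0) : H) = hnat hone (nat_of_ord u) by rewrite hnat_one natr_Zp.
have fu : f (u, 0, 0) = (u, 0, 0) by rewrite hu f_nat f_one.
have m1 : hmul k t (u,0,0) (0,0,1) = (0, 0, u * u ^+ k).
  rewrite /hmul /=; congr (_,_,_); ring.
have := congr1 f m1; rewrite fmul fu fc fc /hmul /= => E.
have /= := congr1 (fun w : H => w.2) E.
have -> : u * u ^+ k' * (1 * c1) + u * 0 / 2 * 0 ^+ 2 + (0 - u * 0 / 2) * 0 + t' * u * 0 * 0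
  = u * u ^+ k' * c1 by ring.
by move/(mulIf c1nz); rewrite !exprS.
Qed.

Lemma I2 : k = 2%N -> t = 0 -> k' = 2%N -> t' = 1 -> False.
Proof.
move=> k2 t0 k'2 t'1.
have fmul2 : forall x y, f (hmul 2 0 x y) = hmul 2 1 (f x) (f y) by move=> x y; have := fmul x y; rewrite k2 t0 k'2 t'1.
have [g gK Kg] := fbij.
have wnc : ~ hcentral (f (0, 1, 0)).
  by move/f_central_inv/hcentralE => [_ /= /eqP]; rewrite oner_eq0.
have hw (y : H) : hmul 2 0 y (0, 1, 0) = hnat (0, 1, 0) (nat_of_ord (y.1.1 ^+ 2)).
  by rewrite hnat_a0 // natr_Zp /hmul /=; congr (_,_,_); ring.
pose m := nat_of_ord ((g (1, 1, 0)).1.1 ^+ 2).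
have E : hmul 2 1 (1, 1, 0) (f (0, 1, 0)) = hnat (f (0, 1, 0)) m.
  by rewrite -{1}(Kg (1,1,0)) -fmul2 hw f_nat.
move: wnc E; case: (f (0, 1, 0)) => [[al be] ga] wnc E.
have hm : hmul 2 1 (1,1,0) (al,be,ga) = (al, al + be, ga + al^+2/2 - al/2 + be).
  by rewrite /hmul /=; congr (_,_,_); field; rewrite ?two_nz.
rewrite hm in E.
have [h1 h2] := hnat12 (al, be, ga) m.
have /= e1 := congr1 (fun w : H => w.1.1) E.
have /= e2 := congr1 (fun w : H => w.1.2) E.
have /= e3 := congr1 (fun w : H => w.2) E.
rewrite h1 /= in e1; rewrite h2 /= in e2.
have [al0|alnz] := eqVneq al 0.
  subst al; have benz : be != 0.
    by apply/eqP => b0; apply: wnc; apply/hcentralE; rewrite b0.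
  move: e2; rewrite add0r -{1}(mul1r be) => /(mulIf benz) m1.
  move: e3; rewrite hnat_a0 //= -m1 mul1r.
  have -> : ga + 0 ^+ 2 / 2 - 0 / 2 + be = ga + be by ring.
  by rewrite -{2}(addr0 ga) => /addrI /eqP; rewrite (negbTE benz).
move: e1; rewrite -{1}(mul1r al) => /(mulIf alnz) m1.
move: e2; rewrite -m1 !mul1r => /eqP; rewrite -{2}(add0r be) (inj_eq (addIr be)).
by rewrite (negbTE alnz).
Qed.

End Iso.

End Model.

Section GroupPart.
Variables (p : nat) (gT : finGroupType).
Hypotheses (pp : prime p) (oG : #|[set: gT]| = p ^ 3)
  (nab : ~~ abelian [set: gT]) (nmc : ~~ metacyclic [set: gT]).
Local Notation G := [set: gT].
Local Open Scope group_scope.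

Let pG : (p.-group G)%g.
Proof. by rewrite /pgroup oG pnatX pnat_id. Qed.

Lemma expP (g : gT) : (g ^+ p = 1)%g.
Proof.
have : (#[g]%g %| p ^ 3)%N by rewrite -oG order_dvdG ?inE.
case/(dvdn_pfactor _ _ pp) => m; rewrite leq_eqVlt => /predU1P[m3|].
  subst m => og; case/negP: nab; apply: cyclic_abelian; apply/cyclicP; exists g.
  by apply/eqP; rewrite eq_sym eqEcard subsetT /= -orderE og oG.
rewrite ltnS leq_eqVlt => /predU1P[m2|].
  subst m => og; case/negP: nmc; apply/metacyclicP; exists <[g]>%G.
  have sgG : <[g]> \subset G by apply: subsetT.
  have iG : #|G : <[g]>| = p.
    apply/eqP; rewrite -(eqn_pmul2l (cardG_gt0 <[g]>)) (Lagrange sgG) -orderE og oG.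
    by rewrite -expnSr.
  have nsG : <[g]> <| G.
    by apply: p_maximal_normal pG _; apply: p_index_maximal => //; rewrite iG.
  split=> //; first exact: cycle_cyclic.
  by apply: prime_cyclic; rewrite card_quotient ?normal_norm // iG.
rewrite ltnS => m1 og; apply/eqP; rewrite -order_dvdn og.
by case: m m1 og => [|[|]] //= _ _; rewrite ?dvd1n ?expn1.
Qed.

Lemma exists_xy : exists x y : gT, ~ commute x y.
Proof.
have [x _ nx] := subsetPn nab.
rewrite -sub_cent1 in nx; have [y _ ny] := subsetPn nx.
by exists x, y => /cent1P; rewrite cent1C (negbTE ny).
Qed.

Lemma p_odd : odd p.
Proof.
case: (even_prime pp) => // p2.
exfalso; have [x [y nxy]] := exists_xy; apply: nxy.
have inv2 (g : gT) : (g^-1 = g)%g.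
  by apply/eqP; rewrite eq_invg_mul -expg2 -p2 expP.
by rewrite /commute -{1}(inv2 (x * y)%g) invMg !inv2.
Qed.

Lemma valD (a b : 'F_p) : nat_of_ord (a + b)%R = ((a + b) %% p)%N.
Proof. by rewrite /=; congr (_ %% _); apply: Fp_cast. Qed.
Lemma valM (a b : 'F_p) : nat_of_ord (a * b)%R = ((a * b) %% p)%N.
Proof. by rewrite /=; congr (_ %% _); apply: Fp_cast. Qed.

Lemma mid (u w v : gT) : commute w v -> u * w * v = u * v * w.
Proof. by move=> cwv; rewrite -!mulgA cwv. Qed.

Lemma model_iso : exists f : H p -> gT,
  bijective f /\ forall u v, f (hadd u v) = f u * f v.
Proof.
have [x [y nxy]] := exists_xy.
pose z := [~ x, y].
have esG : extraspecial G.
  by apply: (p3group_extraspecial pG nab); rewrite oG pfactorK.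
have zZ : z \in 'Z(G).
  by have [[_ <-] _] := esG; rewrite derg1; apply: mem_commg; rewrite inE.
have cz g : commute z g.
  by move: zZ => /setIP [_ /centP]; apply; rewrite inE.
have cZ n g : commute (z ^+ n) g by apply: commute_sym; apply: commuteX; apply: commute_sym.
have sw (a b : nat) : x ^+ a * y ^+ b = y ^+ b * x ^+ a * z ^+ (a * b).
  by rewrite commgC commXXg //; apply: commute_sym.
have gm (a b c a' b' c' : nat) :
  (y ^+ b * x ^+ a * z ^+ c) * (y ^+ b' * x ^+ a' * z ^+ c') =
  y ^+ (b + b') * x ^+ (a + a') * z ^+ (c + c' + a * b').
  rewrite !mulgA (mid _ (cZ c _)) (mid _ (cZ c _)).
  rewrite -(mulgA (y ^+ b)) sw !mulgA (mid _ (cZ (a * b')%N (x ^+ a'))).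
  rewrite -(expgnDr y) -(mulgA _ (x ^+ a)) -(expgnDr x) -!mulgA; congr (_ * (_ * _)).
  by rewrite -!expgnDr addnC.
pose f (u : H p) := y ^+ u.1.2 * x ^+ u.1.1 * z ^+ u.2.
have fM u v : f (hadd u v) = f u * f v.
  have xq (g : gT) : g ^+ (Zp_trunc (pdiv p)).+2 = 1 by rewrite (Fp_cast pp) expP.
  rewrite /f gm /hadd /= !(expg_mod _ (xq _)) (expgnDr z) !(expg_mod _ (xq _)).
  by rewrite -expgnDr.
exists f; split => //.
have gS : group_set (f @: setT).
  apply/group_setP; split.
    apply/imsetP; exists (0, 0, 0)%R => //.
    by rewrite /f /= !expg0 !mulg1.
  move=> _ _ /imsetP [u _ ->] /imsetP [v _ ->].
  by apply/imsetP; exists (hadd u v) => //; rewrite fM.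
pose S := Group gS.
have xS : x \in S.
  apply/imsetP; exists (1, 0, 0)%R => //.
  by rewrite /f /= !expg0 mul1g mulg1 modn_small.
have yS : y \in S.
  apply/imsetP; exists (0, 1, 0)%R => //.
  by rewrite /f /= !expg0 !mulg1 modn_small.
have pS : (p.-group S)%g by apply: pgroupS pG; apply: subsetT.
have lS : (2 < logn p #|S|)%N.
  rewrite ltnNge; apply/negP => /(p2group_abelian pS) /subsetP /(_ x xS) /centP /(_ y yS).
  by move=> cxy; apply: nxy; apply: commute_sym.
have SG : f @: setT = G.
  apply/eqP; rewrite eqEcard subsetT /= oG.
  rewrite (card_pgroup pS); apply: leq_pexp2l; first exact: prime_gt0.
  exact: lS.
have p3 : (p ^ 3 = p * p * p)%N by rewrite !expnS expn0 muln1 mulnA.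
have injf : injective f.
  have : #|f @: [set: H p]| == #|[set: H p]|.
    by rewrite SG oG cardsT !card_prod !card_Fp // p3.
  by move/imset_injP => injS u v; apply: injS; rewrite inE.
apply: inj_card_bij injf _.
by rewrite !card_prod !card_Fp // -cardsT oG p3.
Qed.

End GroupPart.

Lemma powdiff p (pp : prime p) i j : (i < j)%N -> (j < p)%N ->
  exists u : 'F_p, (u ^+ i != u ^+ j)%R.
Proof.
move=> ij jp; have [u Hu|allu] := pickP (fun u : 'F_p => (u ^+ i != u ^+ j)%R).
  by exists u.
pose P : {poly 'F_p} := ('X^j - 'X^i)%R.
have sP : size P = j.+1.
  by rewrite /P size_polyDl ?size_polyN !size_polyXn.
have Pnz : P != 0%R by rewrite -size_poly_eq0 sP.
have allr : all (root P) (enum 'F_p).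
  apply/allP => u _; rewrite /root /P !hornerE subr_eq0 eq_sym.
  by move: (allu u) => /= /negbFE.
have := max_poly_roots Pnz allr (enum_uniq 'F_p).
by rewrite -cardE card_Fp // sP ltnS leqNgt jp.
Qed.

Lemma pow_ne p (pp : prime p) k k' : (0 < k)%N -> (0 < k')%N -> (k < p)%N -> (k' < p)%N ->
  k != k' -> exists u : 'F_p, (u ^+ k.+1 != u ^+ k'.+1)%R.
Proof.
wlog kk : k k' / (k < k')%N.
  move=> W k0 k'0 kp k'p; rewrite neq_ltn => /orP [kk|kk]; first by apply: W; rewrite // ltn_eqF.
  have [u Hu] := W k' k kk k'0 k0 k'p kp (negbT (ltn_eqF kk)).
  by exists u; rewrite eq_sym.
move=> k0 _ _ k'p _.
have [e|ne] := eqVneq k'.+1 p.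
  have [u Hu] : exists u : 'F_p, (u ^+ 1 != u ^+ k.+1)%R.
    by apply: powdiff => //; rewrite -e ltnS.
  have := expf_card u; rewrite card_Fp // => fe.
  exists u; rewrite e fe eq_sym.
  by rewrite expr1 in Hu.
have [u Hu] : exists u : 'F_p, (u ^+ k.+1 != u ^+ k'.+1)%R.
  by apply: powdiff => //; rewrite ltn_neqAle ne k'p.
by exists u.
Qed.

Lemma iso_sym (R S : nearring) : nr_isomorphic R S -> nr_isomorphic S R.
Proof.
case=> f [[g fK gK] [fadd fmul]]; exists g; split; first by exists f.
split=> x y; apply: (can_inj fK); rewrite ?fadd ?fmul !gK //.
Qed.

Theorem theorem2 (p : nat) (gT : finGroupType) :
  prime p -> #|[set: gT]| = p ^ 3 ->
  ~~ abelian [set: gT] -> ~~ metacyclic [set: gT] ->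
  exists N : 'I_p.+1 -> nearring,
    (forall i, local_nearring (N i) /\ additive_group_isomorphic (N i) gT) /\
    (forall i j, i != j -> ~ nr_isomorphic (N i) (N j)).
Proof.
move=> pp oG nab nmc.
have podd := p_odd pp oG nab nmc.
have p2 := odd_prime_gt2 podd pp.
have [f [fbij fhom]] := model_iso pp oG nab nmc.
have two_nz : (2 : 'F_p)%R != 0%R.
  apply/eqP => h; have := congr1 (@nat_of_ord _) h.
  by rewrite val_Fp_nat // modn_small.
pose kof (i : 'I_p.+1) := if (i < p)%N then nat_of_ord i else 2%N.
pose tof (i : 'I_p.+1) : 'F_p := if (i < p)%N then 0%R else 1%R.
exists (fun i => NR (kof i) (tof i)); split.
  move=> i; split.
    move=> /=; apply: (NR_local two_nz); rewrite /kof /tof; case: ifP => _; [left | right] => //.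
  by exists f; split.
suff key : forall i j : 'I_p.+1, (i < j)%N -> ~ nr_isomorphic (NR (kof i) (tof i)) (NR (kof j) (tof j)).
  move=> i j; rewrite neq_ltn => /orP [ij|ji]; first exact: key.
  by move/iso_sym; apply: key.
move=> i j ij [phi [pbij [padd pmul]]].
have jp : (j <= p)%N by rewrite -ltnS.
have ip : (i < p)%N by apply: leq_trans ij jp.
have ki : kof i = i by rewrite /kof ip.
have ti : tof i = 0%R by rewrite /tof ip.
have [i0|inz] := eqVneq (nat_of_ord i) 0%N.
  apply: (I0 pbij padd pmul); first by rewrite ki i0.
  rewrite /kof; case: ifP => // _; by rewrite (leq_ltn_trans _ ij).
have [jlt|jge] := boolP (j < p)%N.
  have kj : kof j = j by rewrite /kof jlt.
  have [u Hu] : exists u : 'F_p, (u ^+ i.+1 != u ^+ j.+1)%R.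
    apply: pow_ne => //; [by rewrite lt0n | exact: leq_ltn_trans (leq0n i) ij | by rewrite neq_ltn ij].
  by have := I1 two_nz pbij padd pmul u; rewrite ki kj => E; rewrite E eqxx in Hu.
have kj : kof j = 2%N by rewrite /kof (negbTE jge).
have tj : tof j = 1%R by rewrite /tof (negbTE jge).
have [i2|in2] := eqVneq (nat_of_ord i) 2%N.
  by apply: (I2 two_nz pbij padd pmul); rewrite ?ki ?i2.
have [u Hu] : exists u : 'F_p, (u ^+ i.+1 != u ^+ 3)%R.
  by apply: pow_ne => //; rewrite lt0n.
by have := I1 two_nz pbij padd pmul u; rewrite ki kj => E; rewrite E eqxx in Hu.
Qed.
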